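(* Let $X$ be any Tychonoff space and let $E$ be a Banach space. Then every sequentially continuous linear operator $T:C_p(X)\to E_w$ has a finite-dimensional range.
   Context: For a Tychonoff space $X$, $C_p(X)$ denotes the space of all continuous real-valued functions on $X$ with the topology of pointwise convergence. For a Banach space $E$, $E_w$ denotes $E$ endowed with its weak topology $\sigma(E,E')$. A map between topological spaces is sequentially continuous if it sends convergent sequences to convergent sequences (with the corresponding limits). *)

(* Defs.v *)
From HB Require Import structures.
From mathcomp Require Import all_boot all_order all_algebra.
From mathcomp Require Import all_classical all_reals all_analysis.
Set Implicit Arguments. Unset Strict Implicit. Unset Printing Implicit Defensive.
Import Order.TTheory GRing.Theory Num.Theory.
Import numFieldNormedType.Exports.
Local Open Scope classical_set_scope.
Local Open Scope ring_scope.

Definition tychonoff_space (X : topologicalType) : Prop :=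
  accessible_space X /\ completely_regular_space X.

Definition dual_functional (R : realType) (E : normedModType R) (phi : E -> R) : Prop :=
  (forall (a : R) (x y : E), phi (a *: x + y) = a * phi x + phi y) /\ continuous phi.

(* Convergence of a sequence in E_w = (E, sigma(E,E')): convergence of the
   images under every element of E' (definition of the weak topology as the
   initial topology induced by E'). *)
Definition weak_cvg (R : realType) (E : normedModType R) (s : nat -> E) (y : E) : Prop :=
  forall phi : E -> R, dual_functional phi -> (phi \o s) @ \oo --> phi y.

(* Main.v *)
Require Import Defs.
From HB Require Import structures.
From mathcomp Require Import all_boot all_order all_algebra.
From mathcomp Require Import all_classical all_reals all_analysis.
From mathcomp.algebra_tactics Require Import ring lra.
Set Implicit Arguments. Unset Strict Implicit. Unset Printing Implicit Defensive.
Import Order.TTheory GRing.Theory Num.Theory.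
Import numFieldNormedType.Exports.
Local Open Scope classical_set_scope.
Local Open Scope ring_scope.

(* Proof of theorem1p5. *)

Section HahnBanach.
Context (R : realType) (E : normedModType R).

Definition subsp (D : set E) :=
  D 0 /\ forall (a : R) x z, D x -> D z -> D (a *: x + z).

Definition goodp (D : set E) (f : E -> R) :=
  [/\ subsp D,
      (forall (a : R) x z, D x -> D z -> f (a *: x + z) = a * f x + f z),
      (forall x, D x -> f x <= `|x|) &
      (forall x, ~ D x -> f x = 0)].

Lemma good_f0 D f : goodp D f -> f 0 = 0.
Proof.
case=> [[D0 _] lin _ _] /=.
have := lin (-1) 0 0 D0 D0.
by rewrite scaler0 addr0 mulN1r addNr.
Qed.

Lemma subspB D : subsp D -> forall x x', D x -> D x' -> D (x' - x).
Proof.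
case=> D0 Dl x x' Dx Dx'.
by have := Dl (-1) x x' Dx Dx'; rewrite scaleN1r addrC.
Qed.

Lemma subspZ D : subsp D -> forall (a : R) x, D x -> D (a *: x).
Proof.
case=> D0 Dl a x Dx.
by have := Dl a x 0 Dx D0; rewrite addr0.
Qed.

Lemma good_linZ D f : goodp D f -> forall (a : R) x, D x -> f (a *: x) = a * f x.
Proof.
move=> g a x Dx; have f0 := good_f0 g.
case: g => [[D0 _] lin _ _] /=.
by have := lin a x 0 Dx D0; rewrite /= addr0 f0 addr0.
Qed.

Section Ext.
Variables (D : set E) (f : E -> R) (z : E) (c : R).
Hypothesis gD : goodp D f.
Hypothesis nDz : ~ D z.
Hypothesis clo : forall x, D x -> f x - `|x - z| <= c.
Hypothesis chi : forall x, D x -> c <= `|x + z| - f x.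

Definition Dext : set E := [set w | exists xt : E * R, D xt.1 /\ w = xt.1 + xt.2 *: z].

Definition fext (w : E) : R :=
  match pselect (exists xt : E * R, D xt.1 /\ w = xt.1 + xt.2 *: z) with
  | left H => let xt := projT1 (cid H) in f xt.1 + xt.2 * c
  | right _ => 0
  end.

Lemma ext_uniq x x' t t' : D x -> D x' -> x + t *: z = x' + t' *: z -> x = x' /\ t = t'.
Proof.
move=> Dx Dx' e.
have tt : t = t'.
  apply: contra_notP nDz => /eqP.
  rewrite -subr_eq0 => ne.
  have -> : z = (t - t')^-1 *: (x' - x).
    apply: (@scalerI _ _ (t - t')) => //.
    rewrite scalerA mulfV // scale1r scalerBl.
    apply/eqP; rewrite subr_eq eq_sym addrAC subr_eq [t *: z + x]addrC -e eqxx //.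
  have sD : subsp D by case: gD.
  exact: (subspZ sD _ (subspB sD Dx Dx')).
by split => //; move: e; rewrite tt => /addIr.
Qed.

Lemma fextE x t : D x -> fext (x + t *: z) = f x + t * c.
Proof.
move=> Dx; rewrite /fext; case: pselect => [H|[]]; last by exists (x, t).
case: (cid H) => [[x' t'] /= [Dx' e]] /=.
by have [-> ->] := ext_uniq Dx Dx' e.
Qed.

Lemma ext_good : goodp Dext fext.
Proof.
have f0 := good_f0 gD.
case: (gD) => [[D0 Dl] lin bnd off] /=.
split => /=.
- split; first by exists (0, 0); rewrite /= scale0r addr0.
  move=> a _ _ [[x t] /= [Dx ->]] [[x' t'] /= [Dx' ->]].
  exists (a *: x + x', a * t + t') => /=; split; first exact: Dl.
  by rewrite scalerDr scalerA scalerDl; rewrite addrACA.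
- move=> a _ _ [[x t] /= [Dx ->]] [[x' t'] /= [Dx' ->]].
  have -> : a *: (x + t *: z) + (x' + t' *: z) = (a *: x + x') + (a * t + t') *: z.
    by rewrite scalerDr scalerA scalerDl addrACA.
  rewrite !fextE //; last exact: Dl.
  by rewrite lin // mulrDl mulrDr mulrA addrACA.
- move=> _ [[x t] /= [Dx ->]]; rewrite fextE //.
  have [t0|t0|->] := ltgtP t 0; last by rewrite mul0r addr0 scale0r addr0; exact: bnd.
  +
    pose s := - t; have s0 : 0 < s by rewrite oppr_gt0.
    have := clo (subspZ (conj D0 Dl) s^-1 Dx).
    rewrite (good_linZ gD _ Dx) => h.
    have h2 : s * (s^-1 * f x - `|s^-1 *: x - z|) <= s * c by rewrite ler_pM2l.
    rewrite mulrBr mulrA mulfV ?gt_eqF // mul1r in h2.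
    have e : s * `|s^-1 *: x - z| = `|x + t *: z|.
      by rewrite -{1}[s]gtr0_norm // -normrZ scalerBr scalerA mulfV ?gt_eqF // scale1r /s scaleNr opprK.
    rewrite e in h2; rewrite /s mulNr in h2; lra.
  + have := chi (subspZ (conj D0 Dl) t^-1 Dx).
    rewrite (good_linZ gD _ Dx) => h.
    have h2 : t * c <= t * (`|t^-1 *: x + z| - t^-1 * f x) by rewrite ler_pM2l.
    rewrite mulrBr mulrA mulfV ?gt_eqF // mul1r in h2.
    have e : t * `|t^-1 *: x + z| = `|x + t *: z|.
      by rewrite -{1}[t]gtr0_norm // -normrZ scalerDr scalerA mulfV ?gt_eqF // scale1r.
    rewrite e in h2; lra.
- move=> w nw; rewrite /fext; case: pselect => // H; exfalso; exact: nw.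
Qed.

Lemma fext_on x : D x -> fext x = f x.
Proof.
move=> Dx; have := fextE 0 Dx; rewrite scale0r addr0 mul0r addr0; exact.
Qed.

Lemma fext_z : fext z = c.
Proof.
have f0 := good_f0 gD.
case: (gD) => [[D0 _] _ _ _].
have := fextE 1 D0; rewrite scale1r add0r f0 mul1r add0r; exact.
Qed.

Lemma Dext_sup : D `<=` Dext.
Proof. by move=> x Dx; exists (x, 0); rewrite /= scale0r addr0. Qed.

Lemma Dext_z : Dext z.
Proof. by case: (gD) => [[D0 _] _ _ _]; exists (0, 1); rewrite /= scale1r add0r. Qed.

End Ext.

Lemma ext_c D f z : goodp D f -> exists c,
  (forall x, D x -> f x - `|x - z| <= c) /\ (forall x, D x -> c <= `|x + z| - f x).
Proof.
move=> gD; have f0 := good_f0 gD.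
case: (gD) => [[D0 Dl] lin bnd off] /=.
have key x x' : D x -> D x' -> f x - `|x - z| <= `|x' + z| - f x'.
  move=> Dx Dx'.
  have := bnd _ (Dl 1 x x' Dx Dx'); rewrite lin // mul1r scale1r => h.
  have : `|x + x'| <= `|x - z| + `|x' + z|.
    have -> : x + x' = (x - z) + (x' + z) by rewrite addrACA addNr addr0.
    exact: ler_normD.
  lra.
pose S := [set f x - `|x - z| | x in D].
have S0 : S !=set0 by exists (f 0 - `|0 - z|), 0.
have Sub : has_ubound S by exists (`|0 + z| - f 0) => _ [x Dx <-]; exact: key.
exists (sup S); split.
- by move=> x Dx; apply: ub_le_sup => //; exists x.
- by move=> x' Dx'; apply: ge_sup => // _ [x Dx <-]; exact: key.
Qed.

End HahnBanach.

Section HB2.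
Context (R : realType) (E : normedModType R) (y : E).
Hypothesis y0 : y != 0.

Definition HBT := {p : set E * (E -> R) | goodp p.1 p.2 /\ p.1 y /\ p.2 y = `|y|}.
Definition HBrel (s t : HBT) : bool :=
  `[< (sval s).1 `<=` (sval t).1 /\ forall x, (sval s).1 x -> (sval t).2 x = (sval s).2 x >].

Lemma HB_base : exists b : HBT, True.
Proof.
have g0 : goodp [set 0 : E] (fun=> 0).
  split => //=.
  - by split => // a x z -> ->; rewrite scaler0 addr0.
  - by move=> a x z _ _; rewrite mulr0 addr0.
have nD : ~ [set 0 : E] y by move=> /= e; move: y0; rewrite e eqxx.
have clo : forall x, [set 0 : E] x -> 0 - `|x - y| <= `|y|.
  by move=> x /= ->; rewrite !sub0r normrN; have := normr_ge0 y; lra.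
have chi : forall x, [set 0 : E] x -> `|y| <= `|x + y| - 0.
  by move=> x /= ->; rewrite add0r subr0.
have := ext_good g0 nD clo chi => gE.
exists (exist _ (Dext [set 0 : E] y, fext [set 0 : E] (fun=> 0) y `|y|) (conj gE (conj (Dext_z y g0) (fext_z `|y| g0 nD)))).
done.
Qed.

Lemma HB_max : exists m : HBT, forall s, HBrel m s -> s = m.
Proof.
apply: Zorn.
- by move=> t; apply/asboolP; split.
- move=> r s t /asboolP [rs1 rs2] /asboolP [st1 st2]; apply/asboolP; split.
    exact: subset_trans st1.
  by move=> x rx; rewrite st2 ?rs2 //; exact: rs1.
- move=> [[D f] [gf [Dy fy]]] [[D' f'] [gf' [Dy' fy']]] /asboolP [s1 s2] /asboolP [t1 t2].
  move: s1 s2 t1 t2 => /= s1 s2 t1 t2.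
  move: gf gf' => /= gf gf'.
  have eD : D = D' by apply/seteqP; split.
  subst D'.
  have ef : f = f'.
    apply/funext => x; have [Dx|nDx] := pselect (D x); first by rewrite s2.
    by case: gf => _ _ _ off; case: gf' => _ _ _ off'; rewrite off // off'.
  subst f'; congr exist; exact: Prop_irrelevance.
move=> A tA.
have [[s0 As0]|nA] := pselect (exists s, A s); last first.
  by have [b _] := HB_base; exists b => s As; exfalso; apply: nA; exists s.
pose DU := fun x => exists s, A s /\ (sval s).1 x.
pose fU := fun x => match pselect (exists s, A s /\ (sval s).1 x) with
  | left H => (sval (projT1 (cid H))).2 x | right _ => 0 end.
have fUE s x : A s -> (sval s).1 x -> fU x = (sval s).2 x.
  move=> As sx; rewrite /fU; case: pselect => [H|[]]; last by exists s.
  case: (cid H) => s' [As' s'x] /=.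
  by have [/asboolP [_ ->]|/asboolP [_ ->]] := tA _ _ As As'.
have two s s' : A s -> A s' -> exists t, [/\ A t, (sval s).1 `<=` (sval t).1 & (sval s').1 `<=` (sval t).1].
  move=> As As'; have [/asboolP [h _]|/asboolP [h _]] := tA _ _ As As'.
    by exists s'; split.
  by exists s; split.
have gU : goodp DU fU.
  split.
  - split; first by exists s0; split => //; case: (svalP s0) => [[[]]].
    move=> a x z [s [As sx]] [s' [As' s'z]].
    have [t [At st s't]] := two _ _ As As'.
    exists t; split => //; case: (svalP t) => [[[_ Dl] _ _ _] _]; apply: Dl; [exact: st|exact: s't].
  - move=> a x z [s [As sx]] [s' [As' s'z]].
    have [t [At st s't]] := two _ _ As As'.
    have tx := st _ sx; have tz := s't _ s'z.
    case: (svalP t) => [[[_ Dl] lin _ _] _].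
    by rewrite !(fUE t) //; [exact: lin|exact: Dl].
  - move=> x [s [As sx]]; rewrite (fUE s) //.
    by case: (svalP s) => [[_ _ bnd _] _]; exact: bnd.
  - by move=> x nx; rewrite /fU; case: pselect.
have DUy : DU y by exists s0; split => //; case: (svalP s0) => _ [].
have fUy : fU y = `|y| by rewrite (fUE s0) //; case: (svalP s0) => _ [].
exists (exist _ (DU, fU) (conj gU (conj DUy fUy))) => s As.
apply/asboolP; split => /=.
  by move=> x sx; exists s.
by move=> x sx; rewrite (fUE s).
Qed.

Lemma HB_full : exists psi : E -> R,
  goodp setT psi /\ psi y = `|y|.
Proof.
have [[[D f] [gf [Dy fy]]] mx] := HB_max.
suff eD : D = setT by subst D; exists f.
apply/seteqP; split => // z _; apply: contrapT => nDz.
have [c [clo chi]] := ext_c z gf.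
have gE := ext_good gf nDz clo chi.
have Ey : Dext D z y by exact: (Dext_sup z Dy).
have fEy : fext D f z c y = `|y| by rewrite (fext_on c gf nDz Dy).
pose m' : HBT := exist _ (Dext D z, fext D f z c) (conj gE (conj Ey fEy)).
have hr : HBrel (exist _ (D, f) (conj gf (conj Dy fy))) m'.
  apply/asboolP; split => /=; first by move=> x Dx; exact: (Dext_sup z Dx).
  by move=> x Dx; rewrite (fext_on c gf nDz Dx).
have e := mx _ hr.
have := Dext_z z gf; move: e => /(congr1 (fun s : HBT => (sval s).1 z)) /= ->.
exact: nDz.
Qed.

End HB2.

Lemma hahn_banach (R : realType) (E : normedModType R) (y : E) :
  exists psi : E -> R, (forall (a : R) x z, psi (a *: x + z) = a * psi x + psi z) /\
    (forall x, `|psi x| <= `|x|) /\ psi y = `|y|.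
Proof.
have [->|y0] := eqVneq y 0.
  exists (fun=> 0); split; first by move=> *; rewrite mulr0 addr0.
  by rewrite normr0 normr0; split.
have [psi [[_ lin bnd _] py]] := HB_full y0.
exists psi; split; first by move=> a x z; apply: lin.
split => // x; rewrite ler_norml bnd // andbT.
have := bnd (- x) I; rewrite normrN.
have -> : psi (- x) = - psi x.
  have p0 : psi 0 = 0.
    by have := lin (-1) 0 0 I I; rewrite scaler0 addr0 mulN1r addNr.
  by have := lin (-1) x 0 I I; rewrite scaleN1r addr0 p0 addr0 mulN1r.
lra.
Qed.

Lemma lip_cont (R : realType) (E : normedModType R) (psi : E -> R) (C : R) :
  0 < C -> (forall x z, `|psi x - psi z| <= C * `|x - z|) -> continuous psi.
Proof.
move=> C0 h x; apply/(@cvgrPdist_lt _ _ _ (nbhs x)) => e e0; near=> z.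
rewrite (le_lt_trans (h _ _)) // -ltr_pdivlMl //.
by near: z; apply: cvgr_dist_lt => //; rewrite mulr_gt0 ?invr_gt0.
Unshelve. all: by end_near. Qed.

Lemma hb_dual (R : realType) (E : normedModType R) (y : E) :
  exists psi : E -> R, dual_functional psi /\ (forall x, `|psi x| <= `|x|) /\ psi y = `|y|.
Proof.
have [psi [lin [bnd py]]] := hahn_banach y.
have psiB x z : psi (x - z) = psi x - psi z.
  by have := lin (-1) z x; rewrite scaleN1r addrC => ->; rewrite mulN1r addrC.
exists psi; split => //; split => //.
apply: (@lip_cont _ _ _ 1) => // x z; rewrite mul1r -psiB; exact: bnd.
Qed.

Lemma dual_zero (R : realType) (E : normedModType R) (y : E) :
  (forall phi : E -> R, dual_functional phi -> phi y = 0) -> y = 0.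
Proof.
move=> h; have [psi [d [_ py]]] := hb_dual y.
by apply/normr0_eq0; rewrite -py; exact: h.
Qed.

Lemma dual_B (R : realType) (E : normedModType R) (phi : E -> R) :
  dual_functional phi -> forall x z, phi (x - z) = phi x - phi z.
Proof.
by case=> lin _ x z; have := lin (-1) z x; rewrite scaleN1r addrC => ->; rewrite mulN1r addrC.
Qed.

Lemma dual_Z (R : realType) (E : normedModType R) (phi : E -> R) :
  dual_functional phi -> forall (a : R) x, phi (a *: x) = a * phi x.
Proof.
move=> d a x; have p0 : phi 0 = 0 by rewrite -(subrr 0) dual_B // subrr.
by case: d => lin _; have := lin a x 0; rewrite addr0 p0 addr0.
Qed.


Section Main.
Context (R : realType) (X : topologicalType) (E : normedModType R) (T : (X -> R) -> E).
Hypothesis Tlin : forall (a : R) (f g : X -> R), continuous f -> continuous g ->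
            T (a *: f + g) = a *: T f + T g.
Hypothesis Tseq : forall (u : nat -> X -> R) (f : X -> R),
            (forall n, continuous (u n)) -> continuous f ->
            {ptws, u @ \oo --> f} -> weak_cvg (T \o u) (T f).

Implicit Types f g h p : X -> R.

Lemma ccst (c : R) : continuous (fun _ : X => c).
Proof. exact: cst_continuous. Qed.
Arguments ccst : clear implicits.

Lemma cadd f g : continuous f -> continuous g -> continuous (fun x => f x + g x).
Proof. by move=> cf cg x; exact: (continuousD (cf x) (cg x)). Qed.

Lemma copp f : continuous f -> continuous (fun x => - f x).
Proof. by move=> cf x; exact: (continuousN (cf x)). Qed.

Lemma csub f g : continuous f -> continuous g -> continuous (fun x => f x - g x).
Proof. by move=> cf cg; apply: cadd => //; exact: copp. Qed.

Lemma cmul f g : continuous f -> continuous g -> continuous (fun x => f x * g x).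
Proof. by move=> cf cg x; exact: (continuousM (cf x) (cg x)). Qed.

Lemma cscal (a : R) f : continuous f -> continuous (fun x => a * f x).
Proof. by move=> cf; apply: cmul => //; exact: ccst. Qed.

Lemma cmax f g : continuous f -> continuous g -> continuous (fun x => Num.max (f x) (g x)).
Proof. by move=> cf cg x; exact: (@continuous_max R X f g x (cf x) (cg x)). Qed.

Lemma cmin f g : continuous f -> continuous g -> continuous (fun x => Num.min (f x) (g x)).
Proof. by move=> cf cg x; exact: (@continuous_min R X f g x (cf x) (cg x)). Qed.

Lemma funE (a : R) f g : a *: f + g = (fun x => a * f x + g x).
Proof. by apply/funext => x. Qed.

Lemma T0 : T (fun _ => 0) = 0.
Proof.
have := Tlin (-1) (ccst 0) (ccst 0); rewrite funE scaleN1r addNr.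
by rewrite mulr0 addr0.
Qed.

Lemma TD f g : continuous f -> continuous g -> T (fun x => f x + g x) = T f + T g.
Proof. by move=> cf cg; have := Tlin 1 cf cg; rewrite funE scale1r; under eq_fun do rewrite mul1r. Qed.

Lemma TZ (a : R) f : continuous f -> T (fun x => a * f x) = a *: T f.
Proof.
move=> cf; have := Tlin a cf (ccst 0); rewrite funE T0 addr0.
by under eq_fun do rewrite addr0.
Qed.

Lemma TN f : continuous f -> T (fun x => - f x) = - T f.
Proof.
move=> cf; rewrite -scaleN1r -TZ //; congr T; apply/funext => x; by rewrite mulN1r.
Qed.

Lemma TB f g : continuous f -> continuous g -> T (fun x => f x - g x) = T f - T g.
Proof. by move=> cf cg; rewrite TD ?TN //; exact: copp. Qed.

Lemma ptws_ev (u : nat -> X -> R) f :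
  (forall x, exists N, forall n, (N <= n)%N -> u n x = f x) -> {ptws, u @ \oo --> f}.
Proof.
move=> h; apply/pointwise_cvgP => x.
have [N hN] := h x.
apply: cvg_near_cst; exists N => // n /= Nn; exact: hN.
Qed.

Lemma ptws_le (u : nat -> X -> R) (K : X -> R) :
  (forall n x, `|u n x| <= K x / n.+1%:R) -> {ptws, u @ \oo --> (fun _ => 0)}.
Proof.
move=> h; apply/pointwise_cvgP => x /=.
apply/cvgr0Pnorm_lt => e e0.
have : (fun n => K x * harmonic n) @ \oo --> 0.
  rewrite -(mulr0 (K x)); apply: cvgMr; exact: cvg_harmonic.
move/cvgr0_norm_lt => /(_ e e0); apply: filterS => n /=.
by apply: le_lt_trans; rewrite (le_trans (h n x)) // ler_norm.
Qed.


Lemma dual_0 (phi : E -> R) : dual_functional phi -> phi 0 = 0.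
Proof. by move=> d; rewrite -(subrr 0) dual_B // subrr. Qed.

Lemma wk_lim (u : nat -> X -> R) f phi : (forall n, continuous (u n)) -> continuous f ->
  {ptws, u @ \oo --> f} -> dual_functional phi ->
  (fun n => phi (T (u n))) @ \oo --> phi (T f).
Proof. by move=> cu cf pu d; exact: (Tseq cu cf pu d). Qed.

Lemma wk_const (u : nat -> X -> R) f y : (forall n, continuous (u n)) -> continuous f ->
  {ptws, u @ \oo --> f} -> (forall n, T (u n) = y) -> y = T f.
Proof.
move=> cu cf pu hy; apply/eqP; rewrite -subr_eq0; apply/eqP; apply: dual_zero => phi d.
rewrite dual_B //; apply/eqP; rewrite subr_eq0; apply/eqP.
have := wk_lim cu cf pu d; under eq_fun do rewrite hy.
by move=> h; apply: (cvg_unique _ (cvg_cst (phi y)) h).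
Qed.

Lemma trunc_ev p : continuous p -> (forall x, 0 <= p x) -> T p != 0 ->
  exists N, forall n, (N <= n)%N -> T (fun x => Num.max (p x - n.+1%:R^-1) 0) != 0.
Proof.
move=> cp p0 Tp0.
have [phi [d [_ py]]] := hb_dual (T p).
pose u n := fun x => Num.min (p x) n.+1%:R^-1.
have cu n : continuous (u n) by apply: cmin => //; exact: ccst.
have pu : {ptws, u @ \oo --> (fun _ => 0)}.
  apply: (@ptws_le _ (fun _ => 1)) => n x; rewrite mul1r /u.
  rewrite ger0_norm; first by rewrite ge_min lexx orbT.
  by rewrite le_min p0 /= invr_ge0 ler0n.
have h := wk_lim cu (ccst 0) pu d; rewrite T0 dual_0 // in h.
have e0 : 0 < `|T p| / 2 by rewrite divr_gt0 // normr_gt0.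
have [N _ hN] := cvgr0_norm_lt _ h _ e0.
exists N => n Nn; have := hN n Nn => /= hn.
have -> : (fun x => Num.max (p x - n.+1%:R^-1) 0) = (fun x => p x - u n x).
  apply/funext => x; rewrite /u.
  have [hl|hl] := leP (p x) n.+1%:R^-1.
    by rewrite subrr max_r // subr_le0.
  by rewrite max_l // subr_ge0 ltW.
rewrite TB //; apply/negP; rewrite subr_eq0 => /eqP e.
move: hn; rewrite -e py ger0_norm //; have := normr_ge0 (T p); lra.
Qed.

End Main.

Lemma posmin (R : realType) (b : nat -> R) m : (forall j, (j < m)%N -> 0 < b j) ->
  exists t, 0 < t /\ forall j, (j < m)%N -> t <= b j.
Proof.
elim: m => [|m IH] hb; first by exists 1.
have [t [t0 tb]] : exists t, 0 < t /\ forall j, (j < m)%N -> t <= b j.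
  by apply: IH => j jm; apply: hb; exact: ltnW.
exists (Num.min t (b m)); split; first by rewrite lt_min t0 hb.
move=> j; rewrite ltnS leq_eqVlt => /orP [/eqP ->|jm].
  by rewrite ge_min lexx orbT.
by rewrite ge_min tb.
Qed.

Lemma geo_sum (R : realType) n : \sum_(0 <= i < n) (2^-1 : R) ^+ i = 2 - 2 * (2^-1) ^+ n.
Proof.
elim: n => [|n IH]; first by rewrite big_geq // expr0 mulr1 subrr.
rewrite big_nat_recr //= IH exprS.
have h2 : (2 : R) * 2^-1 = 1 by rewrite mulfV.
rewrite mulrA h2 mul1r; lra.
Qed.

Lemma geo_le (R : realType) n : \sum_(0 <= i < n) (2^-1 : R) ^+ i <= 2.
Proof. rewrite geo_sum; have : 0 <= (2 : R) * 2^-1 ^+ n by []. lra. Qed.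

Section Glide.
Context (R : realType) (E : normedModType R) (y : nat -> E).
Hypothesis y0 : forall n, y n != 0.
Variable psi : nat -> E -> R.
Hypothesis psid : forall n, dual_functional (psi n).
Hypothesis psib : forall n x, `|psi n x| <= `|x|.
Hypothesis psiy : forall n, psi n (y n) = `|y n|.

Definition gw (m : nat) : R := (2^-1) ^+ m.

Lemma gw_gt0 m : 0 < gw m.
Proof. by rewrite /gw exprn_gt0. Qed.

Definition Sl (l : seq R) j := \sum_(0 <= i < j.+1) l`_i * psi i (y j).

Definition Pl (l : seq R) := [/\ forall m, (m < size l)%N -> `|l`_m| <= gw m,
   forall j, (j < size l)%N -> Sl l j != 0 &
   forall j m, (j < m)%N -> (m < size l)%N -> `|l`_m| * `|y j| <= `|Sl l j| * gw m / 4].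

Lemma Sl_rcons l a j : (j < size l)%N -> Sl (rcons l a) j = Sl l j.
Proof.
move=> jl; apply: eq_big_nat => i /andP [_ ij].
by rewrite nth_rcons (leq_trans ij jl).
Qed.

Lemma Pl_ext l : Pl l -> exists a, Pl (rcons l a).
Proof.
case=> P1 P2 P3; set m := size l.
have bpos : forall j, (j < m)%N -> 0 < `|Sl l j| * gw m / 4 / `|y j|.
  move=> j jm; have sn := P2 j jm; have yn := y0 j; have g := gw_gt0 m.
  apply: divr_gt0; last by rewrite normr_gt0.
  by apply: divr_gt0 => //; apply: mulr_gt0 => //; rewrite normr_gt0.
have [t [t0 tb]] := @posmin _ (fun j => `|Sl l j| * gw m / 4 / `|y j|) m bpos.
set t1 := Num.min t (gw m).
have t10 : 0 < t1 by rewrite lt_min t0 gw_gt0.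
have t1t : t1 <= t by rewrite ge_min lexx.
have t1g : t1 <= gw m by rewrite ge_min lexx orbT.
set s0 := \sum_(0 <= i < m) l`_i * psi i (y m).
have key a : Sl (rcons l a) m = s0 + a * `|y m|.
  rewrite /Sl big_nat_recr //= nth_rcons ltnn eqxx psiy; congr (_ + _).
  by apply: eq_big_nat => i /andP[_ im]; rewrite nth_rcons im.
have ym0 : 0 < `|y m| by rewrite normr_gt0.
pose a := if s0 + t1 * `|y m| != 0 then t1 else t1 / 2.
have a0 : 0 < a by rewrite /a; case: ifP => _ //; rewrite divr_gt0.
have at1 : a <= t1 by rewrite /a; case: ifP => _ //; lra.
have Sa : s0 + a * `|y m| != 0.
  rewrite /a; case: ifP => // /negbFE /eqP h.
  apply/eqP => h2; have : t1 * `|y m| = 0 by lra.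
  by apply/eqP; rewrite mulf_eq0 negb_or !gt_eqF.
exists a; split; rewrite size_rcons.
- move=> k; rewrite ltnS leq_eqVlt => /orP [/eqP ->|km].
    by rewrite nth_rcons ltnn eqxx gtr0_norm //; lra.
  by rewrite nth_rcons km; exact: P1.
- move=> j; rewrite ltnS leq_eqVlt => /orP [/eqP ->|jm].
    by rewrite key.
  by rewrite Sl_rcons //; exact: P2.
- move=> j k jk; rewrite ltnS leq_eqVlt => /orP [/eqP ek|km].
    rewrite ek in jk *; rewrite nth_rcons ltnn eqxx Sl_rcons //.
    have := tb j jk; have yj : 0 < `|y j| by rewrite normr_gt0.
    rewrite ler_pdivlMr // => h.
    apply: le_trans h; rewrite ler_pM2r // (gtr0_norm a0); lra.
  by rewrite nth_rcons km Sl_rcons ?(ltn_trans jk) //; exact: P3.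
Qed.


Lemma glide_main : exists phi : E -> R, dual_functional phi /\ forall j, phi (y j) != 0.
Proof.
have /choice [nx hnx] : forall l, exists a, Pl l -> Pl (rcons l a).
  move=> l; case: (pselect (Pl l)) => [/Pl_ext [a ha]|np]; first by exists a.
  by exists 0.
pose L k := iter k (fun l => rcons l (nx l)) [::].
have PL k : Pl (L k).
  elim: k => [|k IH]; last exact: hnx.
  by split => //.
have sL k : size (L k) = k by elim: k => //= k IH; rewrite size_rcons IH.
pose a i := (L i.+1)`_i.
have La k i : (i < k)%N -> (L k)`_i = a i.
  elim: k => // k IH; rewrite ltnS leq_eqVlt => /orP [/eqP ->|ik] //.
  by rewrite /= nth_rcons sL ik IH.
pose S j := \sum_(0 <= i < j.+1) a i * psi i (y j).
have SL j k : (j < k)%N -> Sl (L k) j = S j.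
  move=> jk; apply: eq_big_nat => i /andP[_ ij]; rewrite La //.
  exact: leq_trans ij jk.
have A1 m : `|a m| <= gw m.
  by case: (PL m.+1) => P1 _ _; have := P1 m; rewrite sL La // => ->.
have A2 j : S j != 0.
  by case: (PL j.+1) => _ P2 _; have := P2 j; rewrite sL SL // => ->.
have A3 j m : (j < m)%N -> `|a m| * `|y j| <= `|S j| * gw m / 4.
  move=> jm; have jm1 : (j < m.+1)%N by exact: ltnW jm.
  case: (PL m.+1) => _ _ P3; have := P3 j m jm; rewrite sL La // (SL _ _ jm1).
  by move=> ->.
pose u x := fun i => a i * psi i x.
have ub x i : `|u x i| <= `|x| * (2^-1) ^+ i.
  rewrite /u normrM mulrC; apply: ler_pM; [by []|by []|exact: psib|exact: A1].
have hc x : cvgn (series (u x)).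
  apply: normed_cvg.
  apply: (@series_le_cvg _ _ (geometric `|x| (2^-1))).
  - by move=> n /=.
  - by move=> n /=; rewrite mulr_ge0 // exprn_ge0.
  - by move=> n /=; exact: ub.
  - by apply: is_cvg_geometric_series; rewrite ger0_norm // invf_lt1 // ltr1n.
pose phi x := limn (series (u x)).
have phiE x : series (u x) @ \oo --> phi x by exact: hc x.
have lin b x z : phi (b *: x + z) = b * phi x + phi z.
  apply: cvg_lim => //.
  have -> : series (u (b *: x + z)) = (fun n => b * series (u x) n + series (u z) n).
    apply/funext => n; rewrite /series /= /u.
    under eq_bigr => i _ do rewrite (proj1 (psid i)) mulrDr mulrCA.
    by rewrite big_split /= -mulr_sumr.
  by apply: cvgD; [apply: cvgMr; exact: phiE | exact: phiE].
have bnd w : `|phi w| <= 2 * `|w|.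
  apply: (cvgr_to_le (cvg_norm (phiE w))); exists 0%N => // n _ /=.
  apply: le_trans (ler_norm_sum _ _ _) _.
  apply: le_trans (ler_sum _ (fun k _ => ub w k)) _.
  rewrite -mulr_sumr mulrC ler_wpM2r //; exact: geo_le.
have phiB x z : phi (x - z) = phi x - phi z.
  by rewrite addrC -scaleN1r lin mulN1r addrC.
exists phi; split.
  split; first exact: lin.
  apply: (@lip_cont _ _ _ 2) => // x z; rewrite -phiB; exact: bnd.
move=> j.
have c1 : (fun n => series (u (y j)) n - S j) @ \oo --> phi (y j) - S j.
  by apply: cvgB => //; exact: cvg_cst.
have c2 : (fun n => `|series (u (y j)) n - S j|) @ \oo --> `|phi (y j) - S j|.
  exact: cvg_norm c1.
have hb : `|phi (y j) - S j| <= `|S j| / 2.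
  apply: (cvgr_to_le c2); exists j.+1 => // n /= jn.
  have e : series (u (y j)) n = S j + \sum_(j.+1 <= i < n) u (y j) i.
    by rewrite /series /= (big_cat_nat (leq0n j.+1) jn).
  rewrite e addrAC subrr add0r.
  apply: le_trans (ler_norm_sum _ _ _) _.
  apply: (@le_trans _ _ (\sum_(j.+1 <= i < n) `|S j| / 4 * gw i)).
    apply: ler_sum_nat => i /andP[ji _].
    rewrite /u normrM; apply: (@le_trans _ _ (`|a i| * `|y j|)).
      by rewrite ler_wpM2l // psib.
    by rewrite mulrAC; exact: A3.
  rewrite -mulr_sumr.
  have : \sum_(j.+1 <= i < n) gw i <= 2.
    apply: le_trans (geo_le R n).
    rewrite [X in _ <= X](big_cat_nat (leq0n j.+1) jn) /= lerDr.
    by apply: sumr_ge0 => i _; rewrite /gw exprn_ge0.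
  have := normr_ge0 (S j); set G := \sum_(_ <= _ < _) _.
  move=> h1 h2; have h3 : `|S j| / 4 * G <= `|S j| / 4 * 2 by rewrite ler_wpM2l // divr_ge0.
  lra.
apply/negP => /eqP h0; move: hb; rewrite h0 sub0r normrN.
have := A2 j; rewrite -normr_gt0; lra.
Qed.

End Glide.

Lemma glide (R : realType) (E : normedModType R) (y : nat -> E) : (forall n, y n != 0) ->
  exists phi : E -> R, dual_functional phi /\ forall j, phi (y j) != 0.
Proof.
move=> y0.
have /choice [psi hpsi] : forall n, exists psi : E -> R,
    dual_functional psi /\ (forall x, `|psi x| <= `|x|) /\ psi (y n) = `|y n|.
  move=> n; exact: hb_dual.
apply: (@glide_main R E y y0 psi).
- by move=> n; case: (hpsi n).
- by move=> n x; case: (hpsi n) => _ [].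
- by move=> n; case: (hpsi n) => _ [].
Qed.

Section Main2.
Context (R : realType) (X : topologicalType) (E : normedModType R) (T : (X -> R) -> E).
Hypothesis Tlin : forall (a : R) (f g : X -> R), continuous f -> continuous g ->
            T (a *: f + g) = a *: T f + T g.
Hypothesis Tseq : forall (u : nat -> X -> R) (f : X -> R),
            (forall n, continuous (u n)) -> continuous f ->
            {ptws, u @ \oo --> f} -> weak_cvg (T \o u) (T f).

Implicit Types f g h p : X -> R.



Lemma NE (h : nat -> X -> R) : (forall n, continuous (h n)) -> (forall n, T (h n) != 0) ->
  (forall x, exists N, forall n, (N <= n)%N -> h n x = 0) -> False.
Proof.
move=> ch hT hev.
have [phi [d phn]] := glide hT.
pose g n := fun x => (phi (T (h n)))^-1 * h n x.
have cg n : continuous (g n) by apply: cscal.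
have pg : {ptws, g @ \oo --> (fun _ => 0)}.
  apply: ptws_ev => x; have [N hN] := hev x; exists N => n Nn.
  by rewrite /g hN // mulr0.
have := wk_lim Tseq cg (@ccst R X 0) pg d; rewrite (T0 Tlin) dual_0 //.
have -> : (fun n => phi (T (g n))) = (fun _ => 1).
  by apply/funext => n; rewrite /g (TZ Tlin) // dual_Z // mulVf.
move=> h1; have := cvg_unique _ (cvg_cst (1 : R)) h1.
move=> e10; have e1 : (1 : R) = 0 by apply: e10.
by move: (@oner_neq0 R); rewrite e1 eqxx.
Qed.

Definition voff (S : set X) h := forall x, ~ S x -> h x = 0.
Definition null (S : set X) := forall h, continuous h -> voff S h -> T h = 0.
Definition finr (O : set X) := exists (n : nat) (v : nat -> E), forall g, continuous g -> voff O g ->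
  exists c : nat -> R, T g = \sum_(i < n) c i *: v i.
Definition atom (O : set X) := forall U1 U2 : set X, U1 `<=` O -> U2 `<=` O ->
  (forall x, U1 x -> U2 x -> False) -> null U1 \/ null U2.

Lemma voff_in S h x : voff S h -> h x != 0 -> S x.
Proof. by move=> v hx; apply: contrapT => nS; move: hx; rewrite v // eqxx. Qed.

Lemma null_sub A B : A `<=` B -> null B -> null A.
Proof. by move=> AB nB h ch v; apply: nB => // x nx; apply: v => Ax; apply: nx; exact: AB. Qed.

Lemma notnull S : ~ null S -> exists h, [/\ continuous h, voff S h & T h != 0].
Proof.
move=> nn; apply: contrapT => ne; apply: nn => h ch v.
apply/eqP; apply: contrapT => hn; apply: ne; exists h; split => //; exact/negP.
Qed.

Lemma posneg S h : continuous h -> voff S h -> T h != 0 ->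
  exists p, [/\ continuous p, (forall x, 0 <= p x), voff S p & T p != 0].
Proof.
move=> ch v Th.
pose p1 := fun x => Num.max (h x) 0.
pose p2 := fun x => Num.max (- h x) 0.
have c1 : continuous p1 by rewrite /p1; apply: cmax => //; exact: ccst.
have c2 : continuous p2 by rewrite /p2; apply: cmax; [exact: copp|exact: ccst].
have e : h = (fun x => p1 x - p2 x).
  apply/funext => x; rewrite /p1 /p2; have [hx|hx] := leP (h x) 0.
    by rewrite max_l ?oppr_ge0 // sub0r opprK.
  by rewrite max_r ?subr0 // oppr_le0 ltW.
have [T1|T1] := eqVneq (T p1) 0; last first.
  exists p1; split => // [x|x nx]; first by rewrite /p1 le_max lexx orbT.
  by rewrite /p1 v // maxxx.
have [T2|T2] := eqVneq (T p2) 0; last first.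
  exists p2; split => // [x|x nx]; first by rewrite /p2 le_max lexx orbT.
  by rewrite /p2 v // oppr0 maxxx.
by move: Th; rewrite e (TB Tlin) // T1 T2 subrr eqxx.
Qed.

Lemma N2 g : continuous g -> exists M : nat, null [set x | M%:R < `|g x|].
Proof.
move=> cg; apply: contrapT => nM.
have /choice [h hh] : forall M : nat, exists h, [/\ continuous h, voff [set x | M%:R < `|g x|] h & T h != 0].
  move=> M; apply: notnull => nl; apply: nM; exists M; exact: nl.
apply: (@NE h).
- by move=> n; case: (hh n).
- by move=> n; case: (hh n).
move=> x; exists (Num.bound `|g x|) => n bn.
case: (hh n) => _ v _; apply: v => /=.
have := archi_boundP (normr_ge0 (g x)).
have : ((Num.bound `|g x|)%:R <= n%:R :> R) by rewrite ler_nat.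
move=> h1 h2 h3; lra.
Qed.

End Main2.

Definition clamp (R : realType) (t : R) := Num.min (Num.max t 0) 1.

Lemma clamp0 (R : realType) (t : R) : t <= 0 -> clamp t = 0.
Proof. by move=> h; rewrite /clamp max_r // min_l. Qed.

Lemma clamp1 (R : realType) (t : R) : 1 <= t -> clamp t = 1.
Proof. move=> h; have t0 : 0 <= t by lra. by rewrite /clamp max_l // min_r. Qed.

Section Atom.
Context (R : realType) (X : topologicalType) (E : normedModType R) (T : (X -> R) -> E).
Hypothesis Tlin : forall (a : R) (f g : X -> R), continuous f -> continuous g ->
            T (a *: f + g) = a *: T f + T g.
Hypothesis Tseq : forall (u : nat -> X -> R) (f : X -> R),
            (forall n, continuous (u n)) -> continuous f ->
            {ptws, u @ \oo --> f} -> weak_cvg (T \o u) (T f).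

Implicit Types f g h : X -> R.

Variables (O : set X) (p : X -> R) (a0 : R).
Hypothesis cp : continuous p.
Hypothesis p0 : forall x, 0 <= p x.
Hypothesis vp : voff O p.
Hypothesis a00 : 0 < a0.
Hypothesis nU1 : null T [set x | O x /\ p x < a0].

Definition Dp g c := [set x | O x /\ c * p x < g x].
Definition Dm g c := [set x | O x /\ g x < c * p x].

Lemma cclamp f : continuous f -> continuous (fun x => clamp (f x)).
Proof.
move=> cf; rewrite /clamp; apply: cmin; last exact: ccst.
by apply: cmax => //; exact: ccst.
Qed.

Lemma Dp_hi g (K : R) : 0 <= K -> continuous g -> voff O g ->
  null T [set x | K < `|g x|] -> null T (Dp g (2 * K / a0)).
Proof.
move=> K0 cg vg nK h ch vh.
pose u := fun x => clamp (2 / a0 * p x - 1).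
have cu : continuous u.
  apply: cclamp; apply: csub; [exact: cscal|exact: ccst].
have c1 : continuous (fun x => h x * u x) by exact: cmul.
have c2 : continuous (fun x => h x * (1 - u x)).
  by apply: cmul => //; apply: csub => //; exact: ccst.
have -> : h = (fun x => h x * u x + h x * (1 - u x)).
  by apply/funext => x; rewrite mulrBr mulr1 addrC subrK.
rewrite (TD Tlin) // nK // ?nU1 ?addr0 //.
- move=> x /= nx; have [->|hx] := eqVneq (h x) 0; first by rewrite mul0r.
  have [Ox gx] := voff_in vh hx.
  have px : a0 <= p x by rewrite leNgt; apply/negP => h1; apply: nx; split.
  have h2 : 1 <= p x / a0 by rewrite ler_pdivlMr // mul1r.
  have -> : u x = 1 by rewrite /u clamp1 //; lra.
  by rewrite subrr mulr0.
- move=> x /= nx; have [->|hx] := eqVneq (h x) 0; first by rewrite mul0r.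
  have [Ox gx] := voff_in vh hx.
  rewrite /u clamp0 ?mulr0 //.
  rewrite leNgt; apply/negP => hlt.
  have hk : 0 <= K * (2 / a0 * p x - 1) by apply: mulr_ge0 => //; lra.
  apply: nx => /=; have := ler_norm (g x); move: gx; rewrite /=; lra.
Qed.


Lemma Dp_mono g c c' : c' <= c -> Dp g c `<=` Dp g c'.
Proof.
move=> cc x [Ox h]; split => //; apply: le_lt_trans h.
by rewrite ler_wpM2r.
Qed.

Lemma Dm_mono g c c' : c <= c' -> Dm g c `<=` Dm g c'.
Proof.
move=> cc x [Ox h]; split => //; apply: lt_le_trans h _.
by rewrite ler_wpM2r.
Qed.

Lemma Dm_Dp g c : Dm g c `<=` Dp (fun x => - g x) (- c).
Proof. by move=> x [Ox h]; split => //; rewrite mulNr ltrN2. Qed.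

Hypothesis atO : atom T O.

Lemma exists_c g : continuous g -> voff O g ->
  exists c, forall d, 0 < d -> null T (Dp g (c + d)) /\ null T (Dm g (c - d)).
Proof.
move=> cg vg.
have [M nM] := N2 Tlin Tseq cg.
set K : R := M%:R.
have K0 : 0 <= K by rewrite /K ler0n.
have cng : continuous (fun x => - g x) by exact: copp.
have vng : voff O (fun x => - g x) by move=> x nx; rewrite vg // oppr0.
have nM' : null T [set x | K < `|- g x|].
  by apply: null_sub nM => x /=; rewrite normrN.
have hi := Dp_hi K0 cg vg nM.
have hi' := Dp_hi K0 cng vng nM'.
set chi := 2 * K / a0.
have [[c0 Bc0]|nB] := pselect (exists c, ~ null T (Dp g c)); last first.
  exists (- chi) => d d0; split.
    by apply: contrapT => nn; apply: nB; exists (- chi + d).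
  apply: null_sub hi' => x hx.
  have hx' : Dm g (- chi) x by apply: (Dm_mono _ hx); lra.
  by have := Dm_Dp hx'; rewrite opprK.
pose B := [set c | ~ null T (Dp g c)].
have Bub : forall c, B c -> c <= chi.
  move=> c Bc; rewrite leNgt; apply/negP => hc; apply: Bc.
  by apply: null_sub hi; apply: Dp_mono; exact: ltW.
have hsB : has_sup B by split; [exists c0|exists chi => c Bc; exact: Bub].
exists (sup B) => d d0; split.
  apply: contrapT => nn.
  have : sup B + d <= sup B by apply: ub_le_sup => //; case: hsB.
  lra.
have [b Bb hb] := sup_adherent d0 hsB.
have s1 : Dp g b `<=` O by move=> x [].
have s2 : Dm g b `<=` O by move=> x [].
have dis : forall x, Dp g b x -> Dm g b x -> False by move=> x [_ h1] [_ h2]; lra.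
have [nb|nb] := atO s1 s2 dis.
  by exfalso; exact: Bb.
by apply: null_sub nb; apply: Dm_mono; exact: ltW.
Qed.

Lemma val_c g c : continuous g -> voff O g ->
  (forall d, 0 < d -> null T (Dp g (c + d)) /\ null T (Dm g (c - d))) -> T g = c *: T p.
Proof.
move=> cg vg hc.
pose k := fun x => g x - c * p x.
have ck : continuous k by apply: csub => //; exact: cscal.
pose dn (n : nat) : R := n.+1%:R^-1.
have dn0 n : 0 < dn n by rewrite /dn invr_gt0 ltr0n.
pose r1 n := fun x => Num.max (k x - dn n * p x) 0.
pose r2 n := fun x => Num.min (k x + dn n * p x) 0.
have cr1 n : continuous (r1 n).
  by apply: cmax; [apply: csub => //; exact: cscal|exact: ccst].
have cr2 n : continuous (r2 n).
  by apply: cmin; [apply: cadd => //; exact: cscal|exact: ccst].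
have Tr1 n : T (r1 n) = 0.
  have [n1 _] := hc _ (dn0 n); apply: n1 => // x nx.
  rewrite /r1 max_r // /k.
  have [Ox|nOx] := pselect (O x); last by rewrite vg // vp // !mulr0; lra.
  have : ~ (c + dn n) * p x < g x by move=> h1; apply: nx; split.
  rewrite ltNge => /negP/negbNE; lra.
have Tr2 n : T (r2 n) = 0.
  have [_ n2] := hc _ (dn0 n); apply: n2 => // x nx.
  rewrite /r2 min_r // /k.
  have [Ox|nOx] := pselect (O x); last by rewrite vg // vp // !mulr0; lra.
  have : ~ g x < (c - dn n) * p x by move=> h1; apply: nx; split.
  rewrite ltNge => /negP/negbNE; lra.
pose kd n := fun x => k x - r1 n x - r2 n x.
have ckd n : continuous (kd n) by apply: csub => //; apply: csub.
have Tkd n : T (kd n) = T k.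
  have c01 : continuous (fun x => k x - r1 n x) by apply: csub.
  by rewrite /kd (TB Tlin c01 (cr2 n)) (TB Tlin ck (cr1 n)) Tr1 Tr2 !subr0.
have pk : {ptws, kd @ \oo --> (fun _ => 0)}.
  apply: (@ptws_le _ _ _ p) => n x; rewrite /kd /r1 /r2.
  have px := p0 x; have dd := dn0 n.
  have hd : 0 <= dn n * p x by rewrite mulr_ge0 // ltW.
  rewrite -[p x / _]/(p x * dn n).
  have [h1|h1] := leP (k x - dn n * p x) 0; have [h2|h2] := leP 0 (k x + dn n * p x);
    rewrite ler_norml; apply/andP; split; lra.
have Tk0 := wk_const Tseq ckd (@ccst R X 0) pk Tkd.
rewrite (T0 Tlin) in Tk0.
move: Tk0; rewrite /k (TB Tlin) // ?(TZ Tlin) //; last exact: cscal.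
by move/eqP; rewrite subr_eq0 => /eqP.
Qed.

End Atom.

Section Final.
Context (R : realType) (X : topologicalType) (E : normedModType R) (T : (X -> R) -> E).
Hypothesis Tlin : forall (a : R) (f g : X -> R), continuous f -> continuous g ->
            T (a *: f + g) = a *: T f + T g.
Hypothesis Tseq : forall (u : nat -> X -> R) (f : X -> R),
            (forall n, continuous (u n)) -> continuous f ->
            {ptws, u @ \oo --> f} -> weak_cvg (T \o u) (T f).

Implicit Types f g h : X -> R.

Lemma atom_fin O : atom T O -> finr T O.
Proof.
move=> atO.
case: (pselect (exists f, [/\ continuous f, voff O f & T f != 0])) => [[f [cf vf Tf]]|nf]; last first.
  exists 0%N, (fun _ => 0) => g cg vg; exists (fun _ => 0); rewrite big_ord0.
  apply/eqP; apply: contrapT => hne; apply: nf; exists g; split => //; exact/negP.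
have [p [cp p0 vp Tp]] := posneg Tlin cf vf Tf.
have [N hN] := trunc_ev Tlin Tseq cp p0 Tp.
have Tw := hN N (leqnn N).
set a0 : R := N.+1%:R^-1 in Tw.
have a00 : 0 < a0 by rewrite invr_gt0 ltr0n.
have nU1 : null T [set x | O x /\ p x < a0].
  have s1 : [set x | O x /\ p x < a0] `<=` O by move=> x [].
  have s2 : [set x | a0 < p x] `<=` O.
    by move=> x /= hx; apply: (voff_in vp); rewrite gt_eqF // (lt_trans a00 hx).
  have dis : forall x, [set x | O x /\ p x < a0] x -> [set x | a0 < p x] x -> False.
    by move=> x [_ h1] /= h2; lra.
  have [//|n2] := atO _ _ s1 s2 dis.
  exfalso; move: Tw; rewrite n2 ?eqxx //.
    by apply: cmax; [apply: csub => //; exact: ccst|exact: ccst].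
  move=> x /= nx; rewrite max_r // subr_le0; move/negP: nx; by rewrite -leNgt.
exists 1%N, (fun _ => T p) => g cg vg.
have [c hc] := exists_c Tlin Tseq cp p0 a00 nU1 atO cg vg.
exists (fun _ => c); rewrite big_ord1; exact: (val_c Tlin Tseq cp p0 vp cg vg hc).
Qed.

Lemma finr_comb O O1 O2 : (forall g, continuous g -> voff O g -> exists g1 g2,
    [/\ continuous g1, continuous g2, voff O1 g1, voff O2 g2 & T g = T g1 + T g2]) ->
  finr T O1 -> finr T O2 -> finr T O.
Proof.
move=> hs [n1 [v1 h1]] [n2 [v2 h2]].
exists (n1 + n2)%N, (fun i => if (i < n1)%N then v1 i else v2 (i - n1)%N) => g cg vg.
have [g1 [g2 [c1 c2 w1 w2 e]]] := hs g cg vg.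
have [d1 e1] := h1 _ c1 w1; have [d2 e2] := h2 _ c2 w2.
exists (fun i => if (i < n1)%N then d1 i else d2 (i - n1)%N).
rewrite e e1 e2 big_split_ord /=; congr (_ + _); apply: eq_bigr => i _.
  by rewrite /= ltn_ord.
by rewrite /= ltnNge leq_addr /= addKn.
Qed.


Lemma step O : ~ finr T O -> exists O' k S, [/\ ~ finr T O', O' `<=` O, S `<=` O,
  (forall x, S x -> ~ O' x) & [/\ continuous k, voff S k & T k != 0]].
Proof.
move=> nf.
have nat : ~ atom T O by move=> a; apply: nf; exact: atom_fin.
have [U1 [U2 [s1 s2 dis n1 n2]]] : exists U1 U2, [/\ U1 `<=` O, U2 `<=` O,
    (forall x, U1 x -> U2 x -> False), ~ null T U1 & ~ null T U2].
  apply: contrapT => hh; apply: nat => U1 U2 s1 s2 dis.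
  case: (pselect (null T U1)) => [|n1]; first by left.
  case: (pselect (null T U2)) => [|n2]; first by right.
  by exfalso; apply: hh; exists U1, U2; split.
have [h1 [ch1 vh1 Th1]] := notnull n1.
have [h2 [ch2 vh2 Th2]] := notnull n2.
have [p1 [cp1 p10 vp1 Tp1]] := posneg Tlin ch1 vh1 Th1.
have [p2 [cp2 p20 vp2 Tp2]] := posneg Tlin ch2 vh2 Th2.
have [N1 hN1] := trunc_ev Tlin Tseq cp1 p10 Tp1.
have [N2 hN2] := trunc_ev Tlin Tseq cp2 p20 Tp2.
have Tw1 := hN1 (maxn N1 N2) (leq_maxl _ _).
have Tw2 := hN2 (maxn N1 N2) (leq_maxr _ _).
set a : R := (maxn N1 N2).+1%:R^-1 in Tw1 Tw2.
have a0 : 0 < a by rewrite invr_gt0 ltr0n.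
pose w1 := fun x => Num.max (p1 x - a) 0.
pose w2 := fun x => Num.max (p2 x - a) 0.
pose psi := fun x => p1 x - p2 x.
pose Q1 := [set x | O x /\ psi x < a / 2].
pose Q2 := [set x | O x /\ - (a / 2) < psi x].
pose S1 := [set x | a < p1 x].
pose S2 := [set x | a < p2 x].
have S1U x : S1 x -> U1 x.
  by move=> hx; apply: (voff_in vp1); rewrite gt_eqF // (lt_trans a0 hx).
have S2U x : S2 x -> U2 x.
  by move=> hx; apply: (voff_in vp2); rewrite gt_eqF // (lt_trans a0 hx).
have p2z x : S1 x -> p2 x = 0.
  by move=> hx; apply: vp2 => u2; exact: dis _ (S1U _ hx) u2.
have p1z x : S2 x -> p1 x = 0.
  by move=> hx; apply: vp1 => u1; exact: dis _ u1 (S2U _ hx).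
have cw1 : continuous w1.
  by apply: cmax; [apply: csub => //; exact: ccst|exact: ccst].
have cw2 : continuous w2.
  by apply: cmax; [apply: csub => //; exact: ccst|exact: ccst].
have vw1 : voff S1 w1.
  move=> x nx; rewrite /w1 max_r // subr_le0; move/negP: nx; by rewrite -leNgt.
have vw2 : voff S2 w2.
  move=> x nx; rewrite /w2 max_r // subr_le0; move/negP: nx; by rewrite -leNgt.
have cpsi : continuous psi by apply: csub.
have eqa t : (t + a / 4) * (2 / a) = 2 * (t / a) + 2^-1.
  by field; rewrite gt_eqF.
have cov : forall g, continuous g -> voff O g -> exists g1 g2,
    [/\ continuous g1, continuous g2, voff Q1 g1, voff Q2 g2 & T g = T g1 + T g2].
  move=> g cg vg.
  pose u := fun x => clamp ((psi x + a / 4) * (2 / a)).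
  have cu : continuous u.
    apply: cclamp; apply: cmul; last exact: ccst.
    by apply: cadd => //; exact: ccst.
  exists (fun x => g x * (1 - u x)), (fun x => g x * u x); split.
  - by apply: cmul => //; apply: csub => //; exact: ccst.
  - exact: cmul.
  - move=> x nx; have [Ox|nOx] := pselect (O x); last by rewrite vg // mul0r.
    have hp : a / 2 <= psi x by rewrite leNgt; apply/negP => h; apply: nx; split.
    have hq : 2^-1 <= psi x / a by rewrite ler_pdivlMr //; lra.
    by rewrite /u clamp1 ?subrr ?mulr0 // eqa; lra.
  - move=> x nx; have [Ox|nOx] := pselect (O x); last by rewrite vg // mul0r.
    have hp : psi x <= - (a / 2) by rewrite leNgt; apply/negP => h; apply: nx; split.
    have hq : psi x / a <= - 2^-1 by rewrite ler_pdivrMr //; lra.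
    by rewrite /u clamp0 ?mulr0 // eqa; lra.
  - rewrite -(TD Tlin); last exact: cmul.
      by congr T; apply/funext => x; rewrite mulrBr mulr1 subrK.
    by apply: cmul => //; apply: csub => //; exact: ccst.
have [nQ|nQ] : ~ finr T Q1 \/ ~ finr T Q2.
  case: (pselect (finr T Q1)) => f1; last by left.
  case: (pselect (finr T Q2)) => f2; last by right.
  by exfalso; apply: nf; exact: finr_comb cov f1 f2.
- exists Q1, w1, S1; split => //.
  + by move=> x [].
  + by move=> x hx; apply: s1; exact: S1U.
  + move=> x hx [_ hq]; move: hq; rewrite /psi p2z // subr0; move: hx; rewrite /S1 /=; lra.
- exists Q2, w2, S2; split => //.
  + by move=> x [].
  + by move=> x hx; apply: s2; exact: S2U.
  + move=> x hx [_ hq]; move: hq; rewrite /psi p1z // sub0r; move: hx; rewrite /S2 /=; lra.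
Qed.

Lemma not_finr_T : ~ finr T setT -> False.
Proof.
move=> nfT.
have /choice [F hF] : forall O : set X, exists t : set X * (X -> R) * set X,
    ~ finr T O -> [/\ ~ finr T t.1.1, t.1.1 `<=` O, t.2 `<=` O,
      (forall x, t.2 x -> ~ t.1.1 x) & [/\ continuous t.1.2, voff t.2 t.1.2 & T t.1.2 != 0]].
  move=> O; case: (pselect (finr T O)) => fO; first by exists (set0, (fun _ => 0), set0).
  have [Q [k [S hh]]] := step fO.
  by exists (Q, k, S).
pose On n := iter n (fun O => (F O).1.1) setT.
have nfO n : ~ finr T (On n).
  elim: n => [//|n IH]; by case: (hF _ IH).
have hn n := hF _ (nfO n).
pose k n := (F (On n)).1.2.
pose S n := (F (On n)).2.
have sub n m : (n <= m)%N -> On m `<=` On n.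
  move=> nm; elim: m nm => [|m IH]; first by rewrite leqn0 => /eqP ->.
  rewrite leq_eqVlt => /orP [/eqP ->//|]; rewrite ltnS => nm.
  by move=> x hx; apply: IH => //; case: (hn m) => _ s _ _ _; exact: s.
apply: (@NE R X E T Tlin Tseq k).
- by move=> n; case: (hn n) => _ _ _ _ [].
- by move=> n; case: (hn n) => _ _ _ _ [].
move=> x; case: (pselect (exists n, S n x)) => [[n Sn]|nS]; last first.
  exists 0%N => n _; case: (hn n) => _ _ _ _ [_ v _]; apply: v => Sx; apply: nS; by exists n.
exists n.+1 => m nm; case: (hn m) => _ _ sm _ [_ v _]; apply: v => Sm.
have Om : On m x by exact: sm.
have On1 : On n.+1 x by exact: (sub _ _ nm).
by case: (hn n) => _ _ _ dj _; exact: dj _ Sn On1.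
Qed.

End Final.

Theorem theorem1p5 (R : realType) (X : topologicalType)
  (E : completeNormedModType R) (hX : tychonoff_space X)
  (T : (X -> R) -> E)
  (Tlin : forall (a : R) (f g : X -> R), continuous f -> continuous g ->
            T (a *: f + g) = a *: T f + T g)
  (Tseq : forall (u : nat -> X -> R) (f : X -> R),
            (forall n, continuous (u n)) -> continuous f ->
            {ptws, u @ \oo --> f} -> weak_cvg (T \o u) (T f)) :
  exists (n : nat) (v : 'I_n -> E), forall f : X -> R, continuous f ->
    exists c : 'I_n -> R, T f = \sum_(i < n) c i *: v i.
Proof.
apply: contrapT => hne.
apply: (@not_finr_T R X E T Tlin Tseq) => [[n [v hv]]].
apply: hne; exists n, (fun i : 'I_n => v i) => f cf.
have [c hc] := hv f cf (fun x nx => False_ind _ (nx I)).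
by exists (fun i : 'I_n => c i).
Qed.
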